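(* Let $R$ be a commutative ring with identity and $I$ an ideal of $R$. Then the amalgamated duplication $R\bowtie I$ is a properly zipped ring if and only if $R$ is properly zipped.
   Context: $R\bowtie I:=\{(r,r+i)\mid r\in R,\ i\in I\}$, a subring of $R\times R$. A commutative ring $A$ is properly zipped if whenever a prime ideal $\mathfrak{p}$ of $A$ contains the intersection of a family $\{\mathfrak{p}_i\}_i$ of prime ideals of $A$, then $\mathfrak{p}_i\subseteq\mathfrak{p}$ for some $i$. *)

(* Defs.v *)
From HB Require Import structures.
From mathcomp Require Import all_boot all_algebra.
Set Implicit Arguments. Unset Strict Implicit. Unset Printing Implicit Defensive.
Import GRing.Theory.
Local Open Scope ring_scope.

(* Subrings of a commutative ring T are represented by a predicate S on T;
   ideals / prime ideals of the subring S are subsets of S. *)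

Definition is_ideal (T : comPzRingType) (S : T -> Prop) (P : T -> Prop) : Prop :=
  (forall x, P x -> S x) /\ P 0 /\
  (forall x y, P x -> P y -> P (x - y)) /\
  (forall a x, S a -> P x -> P (a * x)).

Definition is_prime_in (T : comPzRingType) (S : T -> Prop) (P : T -> Prop) : Prop :=
  is_ideal S P /\ ~ P 1 /\
  (forall a b, S a -> S b -> P (a * b) -> P a \/ P b).

Definition properly_zipped_in (T : comPzRingType) (S : T -> Prop) : Prop :=
  forall (J : Type) (F : J -> T -> Prop) (p : T -> Prop),
    is_prime_in S p -> (forall j, is_prime_in S (F j)) ->
    (forall x, S x -> (forall j, F j x) -> p x) ->
    exists j, forall x, F j x -> p x.

Definition properly_zipped (R : comPzRingType) : Prop :=
  properly_zipped_in (fun _ : R => True).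

Definition amalg_dup (R : comPzRingType) (I : R -> Prop) : R * R -> Prop :=
  fun x => exists r i, I i /\ x = (r, r + i).

(* Main.v *)
Require Import Defs.
From mathcomp Require Import all_boot all_algebra.
From Stdlib Require Import Classical.
From mathcomp Require Import ring.
Local Open Scope ring_scope.
Import GRing.Theory.

Section Aux.
Variables (R : comPzRingType) (I : R -> Prop).
Hypothesis hI : is_ideal (fun _ : R => True) I.
Local Notation A := (amalg_dup I).

Lemma I0 : I 0. Proof. by case: hI => _ [h _]. Qed.
Lemma IB x y : I x -> I y -> I (x - y). Proof. by case: hI => _ [_ [h _]]; apply: h. Qed.
Lemma IM a x : I x -> I (a * x). Proof. by case: hI => _ [_ [_ h]]; apply: h. Qed.
Lemma IN x : I x -> I (- x). Proof. by move=> h; rewrite -sub0r; apply: IB => //; apply: I0. Qed.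
Lemma ID x y : I x -> I y -> I (x + y).
Proof. by move=> hx hy; rewrite -[y]opprK; apply: IB => //; apply: IN. Qed.
Lemma IMr a x : I x -> I (x * a). Proof. by rewrite mulrC; apply: IM. Qed.

Lemma memA x : A x <-> I (x.2 - x.1).
Proof.
split.
  by case=> r [i [hi ->]] /=; rewrite addrAC subrr add0r.
case: x => a b /= h; exists a, (b - a); split => //.
by rewrite addrC subrK.
Qed.

Lemma A_diag r : A (r, r). Proof. by apply/memA; rewrite /= subrr; apply: I0. Qed.
Lemma A_0s s : I s -> A (0, s). Proof. by move=> h; apply/memA; rewrite /= subr0. Qed.
Lemma A_s0 s : I s -> A (s, 0). Proof. by move=> h; apply/memA; rewrite /= sub0r; apply: IN. Qed.
Lemma AB x y : A x -> A y -> A (x - y).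
Proof.
case: x y => a b [c d] /memA /= h1 /memA /= h2; apply/memA => /=.
have -> : b - d - (a - c) = (b - a) - (d - c) by ring.
by apply: IB.
Qed.

Definition G (Q : R * R -> Prop) (r : R) := Q (r, r).

Lemma primeG Q : is_prime_in A Q -> is_prime_in (fun _ => True) (G Q).
Proof.
case=> [[hS [h0 [hB hM]]] [h1 hP]].
split; [split; [by [] | split; [by [] | split]] | split].
- by move=> x y; apply: hB.
- move=> a x _ hx; exact: (hM (a, a) (x, x) (A_diag a) hx).
- by [].
- move=> a b _ _ hab; exact: (hP (a, a) (b, b) (A_diag a) (A_diag b) hab).
Qed.
Arguments primeG [Q].

Lemma type12 Q : is_prime_in A Q ->
  (forall i, I i -> Q (0, i)) \/ (forall i, I i -> Q (i, 0)).
Proof.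
case=> [[hS [h0 [hB hM]]] [h1 hP]].
case: (classic (forall i, I i -> Q (0, i))) => [h|h]; first by left.
right=> j hj.
have [i [hi nQ]] : exists i, I i /\ ~ Q (0, i).
  apply: NNPP => hn; apply: h => i hi; apply: NNPP => hq; apply: hn; by exists i.
have := hP (0, i) (j, 0) (@A_0s i hi) (@A_s0 j hj).
have e : ((0, i) * (j, 0) : R * R) = (0 * j, i * 0) := erefl.
rewrite e mul0r mulr0 => /(_ h0); by case.
Qed.
Arguments type12 [Q].

Lemma type1_char Q : is_prime_in A Q -> (forall i, I i -> Q (0, i)) ->
  forall x, A x -> (Q x <-> Q (x.1, x.1)).
Proof.
case=> [[hS [h0 [hB hM]]] _] h1 [a b] /memA /= hx; split => hq.
- have -> : (a, a) = (a - 0, b - (b - a)) by congr pair; ring.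
  exact: (hB (a, b) (0, b - a) hq (h1 _ hx)).
- have -> : (a, b) = (a - 0, a - (- (b - a))) by congr pair; ring.
  exact: (hB (a, a) (0, - (b - a)) hq (h1 _ (@IN _ hx))).
Qed.
Arguments type1_char [Q].

Lemma type2_char Q : is_prime_in A Q -> (forall i, I i -> Q (i, 0)) ->
  forall x, A x -> (Q x <-> Q (x.2, x.2)).
Proof.
case=> [[hS [h0 [hB hM]]] _] h1 [a b] /memA /= hx; split => hq.
- have -> : (b, b) = (a - (a - b), b - 0) by congr pair; ring.
  have hab : I (a - b) by rewrite -opprB; apply: IN.
  exact: (hB (a, b) (a - b, 0) hq (h1 _ hab)).
- have -> : (a, b) = (b - (b - a), b - 0) by congr pair; ring.
  exact: (hB (b, b) (b - a, 0) hq (h1 _ hx)).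
Qed.
Arguments type2_char [Q].


Lemma AM x y : A x -> A y -> A (x * y).
Proof.
case: x y => a b [c d] /memA /= h1 /memA /= h2; apply/memA => /=.
have -> : b * d - a * c = b * (d - c) + c * (b - a) by ring.
by apply: ID; apply: IM.
Qed.

Definition lift (Q : R -> Prop) (x : R * R) := A x /\ Q x.1.

Lemma prime_lift Q : is_prime_in (fun _ => True) Q -> is_prime_in A (lift Q).
Proof.
case=> [[_ [h0 [hB hM]]] [h1 hP]].
split; [split; [by move=> x [] | split; [ | split]] | split].
- by split; [exact: (A_diag 0) | ].
- by move=> x y [ax qx] [ay qy]; split; [apply: AB | apply: hB].
- by move=> a x aa [ax qx]; split; [apply: AM | apply: hM].
- by case.
- move=> a b aa ab [_ q]; case: (hP _ _ Logic.I Logic.I q) => ?; [left | right]; by split.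
Qed.
Arguments prime_lift [Q].

Lemma dirA : properly_zipped_in A -> properly_zipped R.
Proof.
move=> zA J F P hP hF hcap.
have [j hj] := zA J (fun j => lift (F j)) (lift P) (@prime_lift P hP)
  (fun j => @prime_lift (F j) (hF j)) (fun x ax hx => conj ax (hcap x.1 Logic.I (fun j => (hx j).2))).
exists j => r hr; exact: (hj (r, r) (conj (A_diag r) hr)).2.
Qed.

Lemma pS Q : is_prime_in A Q -> forall x, Q x -> A x.
Proof. by case=> [[h _] _]. Qed.
Arguments pS [Q].
Lemma p0 Q : is_prime_in A Q -> Q 0.
Proof. by case=> [[_ [h _]] _]. Qed.
Arguments p0 [Q].
Lemma pB Q : is_prime_in A Q -> forall x y, Q x -> Q y -> Q (x - y).
Proof. by case=> [[_ [_ [h _]]] _]. Qed.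
Arguments pB [Q].

Lemma both_types Q : is_prime_in A Q -> (forall s, I s -> Q (s, s)) ->
  (forall i, I i -> Q (0, i)) /\ (forall i, I i -> Q (i, 0)).
Proof.
move=> hQ hd; case: (type12 hQ) => h; split => // i hi.
- have -> : (i, 0) = (i - 0, i - i) by congr pair; ring.
  exact: (pB hQ (i, i) (0, i) (hd _ hi) (h _ hi)).
- have -> : (0, i) = (i - i, i - 0) by congr pair; ring.
  exact: (pB hQ (i, i) (i, 0) (hd _ hi) (h _ hi)).
Qed.
Arguments both_types [Q].

Lemma dirB : properly_zipped R -> properly_zipped_in A.
Proof.
move=> zR J F p hp hF hcap.
have hG := primeG hp.
case: (classic (exists s, I s /\ ~ p (s, s))) => [[s [hs nps]] | hns].
- case: (type12 hp) => tp.
  + pose K := {j : J | forall i, I i -> F j (0, i)}.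
    have hc : forall r, True -> (forall k : K, G (F (proj1_sig k)) r) -> G p r.
      move=> r _ hr.
      have ax : A (r * s, 0) by exact: (@A_s0 (r * s) (@IM r s hs)).
      have : p (r * s, 0).
        apply: hcap => // j.
        case: (type12 (hF j)) => tj.
        * apply: (proj2 (type1_char (hF j) tj _ ax)); rewrite /= [r * s]mulrC; exact: ((primeG (hF j)).1.2.2.2 s r Logic.I (hr (exist _ j tj))).
        * apply: (proj2 (type2_char (hF j) tj _ ax)); exact: (p0 (hF j)).
      move/(proj1 (type1_char hp tp _ ax)) => /= hrs.
      case: hG => _ [_ hPr]; case: (hPr r s Logic.I Logic.I hrs) => // hsp.
    have [[j tj] hj] := zR K (fun k => G (F (proj1_sig k))) (G p) hG
      (fun k => primeG (hF (proj1_sig k))) hc.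
    exists j => x hx /=.
    have ax := pS (hF j) _ hx.
    apply: (proj2 (type1_char hp tp _ ax)); apply: hj.
    exact: (proj1 (type1_char (hF j) tj _ ax) hx).
  + pose K := {j : J | forall i, I i -> F j (i, 0)}.
    have hc : forall r, True -> (forall k : K, G (F (proj1_sig k)) r) -> G p r.
      move=> r _ hr.
      have ax : A (0, r * s) by exact: (@A_0s (r * s) (@IM r s hs)).
      have : p (0, r * s).
        apply: hcap => // j.
        case: (type12 (hF j)) => tj.
        * apply: (proj2 (type1_char (hF j) tj _ ax)); exact: (p0 (hF j)).
        * apply: (proj2 (type2_char (hF j) tj _ ax)); rewrite /= [r * s]mulrC; exact: ((primeG (hF j)).1.2.2.2 s r Logic.I (hr (exist _ j tj))).
      move/(proj1 (type2_char hp tp _ ax)) => /= hrs.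
      case: hG => _ [_ hPr]; case: (hPr r s Logic.I Logic.I hrs) => // hsp.
    have [[j tj] hj] := zR K (fun k => G (F (proj1_sig k))) (G p) hG
      (fun k => primeG (hF (proj1_sig k))) hc.
    exists j => x hx /=.
    have ax := pS (hF j) _ hx.
    apply: (proj2 (type2_char hp tp _ ax)); apply: hj.
    exact: (proj1 (type2_char (hF j) tj _ ax) hx).
- have hd : forall s, I s -> p (s, s).
    by move=> s hs; apply: NNPP => np; apply: hns; exists s.
  have [tp1 tp2] := both_types hp hd.
  have hc : forall r, True -> (forall j, G (F j) r) -> G p r.
    move=> r _ hr; exact: (hcap (r, r) (A_diag r) hr).
  have [j hj] := zR J (fun j => G (F j)) (G p) hG (fun j => primeG (hF j)) hc.
  exists j => x hx.
  have ax := pS (hF j) _ hx.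
  case: (type12 (hF j)) => tj.
  * apply: (proj2 (type1_char hp tp1 _ ax)); apply: hj; exact: (proj1 (type1_char (hF j) tj _ ax) hx).
  * apply: (proj2 (type2_char hp tp2 _ ax)); apply: hj; exact: (proj1 (type2_char (hF j) tj _ ax) hx).
Qed.

End Aux.

Theorem corollary4p8 (R : comPzRingType) (I : R -> Prop)
  (hI : is_ideal (fun _ : R => True) I) :
  properly_zipped_in (amalg_dup I) <-> properly_zipped R.
Proof.
split; [exact: dirA | exact: dirB].
Qed.
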